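(* There exists a (computable) constant $\delta_0>0$ such that for every diagonal physical $Q=\operatorname{diag}(\lambda_1,\lambda_2,\lambda_3)$ with $-\tfrac13<\lambda_1\le\lambda_2\le\lambda_3<\tfrac23$, $\lambda_1+\lambda_2+\lambda_3=0$ and $\lambda_2+\tfrac13<\delta_0$, setting $\nu_1=-(2\mu_1+\mu_2)$, $\nu_2=-(\mu_1+2\mu_2)$ and $A(\phi)=\nu_1\cos^2\phi+\nu_2\sin^2\phi$, one has $$\frac1\pi\int_0^{2\pi}\frac{\mathrm d\phi}{A(\phi)}\le\int_{\mathbb S^2}e^{-\nu_1x^2-\nu_2y^2}\,\mathrm dS\le\frac{\pi^2}{4}\int_0^{2\pi}\frac{\mathrm d\phi}{A(\phi)},$$ $$\frac4{\pi^3}\int_0^{2\pi}\frac{\cos^2\phi}{A^2(\phi)}\,\mathrm d\phi\le\int_{\mathbb S^2}x^2e^{-\nu_1x^2-\nu_2y^2}\,\mathrm dS\le\frac{\pi^4}{16}\int_0^{2\pi}\frac{\cos^2\phi}{A^2(\phi)}\,\mathrm d\phi,$$ $$\frac4{\pi^3}\int_0^{2\pi}\frac{\sin^2\phi}{A^2(\phi)}\,\mathrm d\phi\le\int_{\mathbb S^2}y^2e^{-\nu_1x^2-\nu_2y^2}\,\mathrm dS\le\frac{\pi^4}{16}\int_0^{2\pi}\frac{\sin^2\phi}{A^2(\phi)}\,\mathrm d\phi.$$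
   Context: Points of the unit sphere $\mathbb S^2$ are written $(x,y,z)$, and $\mathrm dS$ is surface measure. For a physical $Q$ (symmetric traceless with all eigenvalues in $(-\tfrac13,\tfrac23)$) the Ball–Majumdar potential is $f(Q)=\inf\int_{\mathbb S^2}\rho\ln\rho\,\mathrm dS$ over even probability densities $\rho$ with $\int(\mathbf n\otimes\mathbf n-\tfrac13I_3)\rho\,\mathrm dS=Q$. For diagonal physical $Q=\operatorname{diag}(\lambda_1,\lambda_2,\lambda_3)$ this infimum is attained by $\rho_Q(x,y,z)=\exp(\mu_1x^2+\mu_2y^2+\mu_3z^2)/Z$, $Z=\int_{\mathbb S^2}\exp(\mu_1x^2+\mu_2y^2+\mu_3z^2)\,\mathrm dS$, where the Lagrange multipliers $\mu_1,\mu_2,\mu_3\in\mathbb R$ satisfy $\mu_1+\mu_2+\mu_3=0$ and $\int x^2\rho_Q\,\mathrm dS=\lambda_1+\tfrac13$, $\int y^2\rho_Q\,\mathrm dS=\lambda_2+\tfrac13$, $\int z^2\rho_Q\,\mathrm dS=\lambda_3+\tfrac13$. *)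

(* Defs.v *)
From Stdlib Require Import Reals.
From Coquelicot Require Import Coquelicot.
Open Scope R_scope.

(* Surface integral over the unit sphere S^2 with respect to surface measure,
   via the standard spherical parametrisation
   (x,y,z) = (sin t cos p, sin t sin p, cos t), dS = sin t dp dt,
   t in [0,pi], p in [0,2pi]. *)
Definition sphere_int (f : R -> R -> R -> R) : R :=
  RInt (fun t =>
    RInt (fun p => f (sin t * cos p) (sin t * sin p) (cos t) * sin t) 0 (2 * PI))
  0 PI.

Definition bm_weight (mu1 mu2 mu3 : R) (x y z : R) : R :=
  exp (mu1 * x ^ 2 + mu2 * y ^ 2 + mu3 * z ^ 2).

Definition bm_Z (mu1 mu2 mu3 : R) : R :=
  sphere_int (bm_weight mu1 mu2 mu3).

(* (mu1,mu2,mu3) are the Lagrange multipliers of the Ball--Majumdar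
   minimiser rho_Q for Q = diag(l1,l2,l3). *)
Definition bm_multipliers (l1 l2 l3 mu1 mu2 mu3 : R) : Prop :=
  mu1 + mu2 + mu3 = 0 /\
  sphere_int (fun x y z => x ^ 2 * bm_weight mu1 mu2 mu3 x y z) / bm_Z mu1 mu2 mu3
    = l1 + 1/3 /\
  sphere_int (fun x y z => y ^ 2 * bm_weight mu1 mu2 mu3 x y z) / bm_Z mu1 mu2 mu3
    = l2 + 1/3 /\
  sphere_int (fun x y z => z ^ 2 * bm_weight mu1 mu2 mu3 x y z) / bm_Z mu1 mu2 mu3
    = l3 + 1/3.

(* Main.v *)
Require Import Defs.
From Stdlib Require Import Reals Lra Psatz.
From Coquelicot Require Import Coquelicot.
Open Scope R_scope.




Definition cont2 (f : R -> R -> R) := forall x y, continuity_2d_pt f x y.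

Lemma c2_pow (g : R -> R -> R) n x y : continuity_2d_pt g x y ->
  continuity_2d_pt (fun u v => g u v ^ n) x y.
Proof.
  intro H. apply (continuity_1d_2d_pt_comp (fun r => r ^ n)); auto.
  apply derivable_continuous_pt. apply derivable_pt_pow.
Qed.
Lemma c2_exp (g : R -> R -> R) x y : continuity_2d_pt g x y ->
  continuity_2d_pt (fun u v => exp (g u v)) x y.
Proof. intro H. apply (continuity_1d_2d_pt_comp exp); auto.
  apply derivable_continuous_pt. apply derivable_exp. Qed.
Lemma c2_sin (g : R -> R -> R) x y : continuity_2d_pt g x y ->
  continuity_2d_pt (fun u v => sin (g u v)) x y.
Proof. intro H. apply (continuity_1d_2d_pt_comp sin); auto. apply continuity_sin. Qed.
Lemma c2_cos (g : R -> R -> R) x y : continuity_2d_pt g x y ->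
  continuity_2d_pt (fun u v => cos (g u v)) x y.
Proof. intro H. apply (continuity_1d_2d_pt_comp cos); auto. apply continuity_cos. Qed.

Ltac c2 := repeat first [
   apply continuity_2d_pt_plus | apply continuity_2d_pt_minus
 | apply continuity_2d_pt_mult | apply continuity_2d_pt_opp
 | apply c2_pow | apply c2_exp | apply c2_sin | apply c2_cos
 | apply continuity_2d_pt_id1 | apply continuity_2d_pt_id2
 | apply continuity_2d_pt_const ].

Lemma cont2_fst f : cont2 f -> forall y x, continuous (fun u => f u y) x.
Proof.
  intros H y x. apply continuity_pt_filterlim. apply continuity_pt_locally.
  intro eps. destruct (H x y eps) as [d Hd]. exists d. intros u Hu.
  apply Hd. exact Hu. rewrite Rminus_eq_0, Rabs_R0. apply cond_pos.
Qed.
Lemma cont2_snd f : cont2 f -> forall x y, continuous (fun v => f x v) y.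
Proof.
  intros H x y. apply continuity_pt_filterlim. apply continuity_pt_locally.
  intro eps. destruct (H x y eps) as [d Hd]. exists d. intros u Hu.
  apply Hd. rewrite Rminus_eq_0, Rabs_R0. apply cond_pos. exact Hu.
Qed.
Lemma cont2_swap f : cont2 f -> cont2 (fun u v => f v u).
Proof.
  intros H x y eps. destruct (H y x eps) as [d Hd]. exists d. intros u v Hu Hv.
  apply Hd; auto.
Qed.

Lemma exR (f : R -> R) a b : (forall z, continuous f z) -> ex_RInt f a b.
Proof. intro H. apply (ex_RInt_continuous (V:=R_CompleteNormedModule)). intros; apply H. Qed.

Lemma param_cont_aux f c d : cont2 f -> c <= d -> forall x, continuous (fun u => RInt (fun v => f u v) c d) x.
Proof.
  intros H Hcd x.
  apply continuity_pt_filterlim. apply continuity_pt_locally.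
  intro eps.
  set (e := eps / (2 * (d - c + 1))).
  assert (He : 0 < e). { unfold e. apply Rdiv_lt_0_compat. destruct eps; simpl; lra. lra. }
  destruct (uniform_continuity_2d f (x - 1) (x + 1) c d) with (mkposreal e He) as [delta Hdel].
  { intros; apply H. }
  assert (Hm : 0 < Rmin delta 1). { apply Rmin_pos. apply cond_pos. lra. }
  exists (mkposreal _ Hm). intros u Hu. simpl in Hu. unfold ball in Hu; simpl in Hu.
  unfold AbsRing_ball, abs, minus, plus, opp in Hu; simpl in Hu.
  assert (Hu1 : Rabs (u - x) < delta). { eapply Rlt_le_trans. exact Hu. apply Rmin_l. }
  assert (Hu2 : Rabs (u - x) < 1). { eapply Rlt_le_trans. exact Hu. apply Rmin_r. }
  apply Rabs_lt_between in Hu2.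
  assert (Hex : forall w, ex_RInt (fun v => f w v) c d).
  { intro w. apply exR. intros z. now apply cont2_snd. }
  replace (RInt (fun v => f u v) c d - RInt (fun v => f x v) c d)
    with (RInt (fun v => f u v - f x v) c d).
  2:{ rewrite (RInt_minus (fun v => f u v) (fun v => f x v)); auto. }
  eapply Rle_lt_trans.
  apply (abs_RInt_le_const _ c d e). exact Hcd.
  apply (ex_RInt_minus (fun v => f u v) (fun v => f x v)); auto.
  intros t Ht. left. apply (Hdel x t u t); try lra. rewrite Rminus_eq_0, Rabs_R0. apply cond_pos.
  unfold e. destruct eps as [ep Hep]; simpl.
  apply Rmult_lt_reg_r with (2 * (d - c + 1)). lra.
  field_simplify; try lra. nra.
Qed.

Lemma param_cont f c d : cont2 f -> forall x, continuous (fun u => RInt (fun v => f u v) c d) x.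
Proof.
  intros H x. destruct (Rle_dec c d) as [h|h]. now apply param_cont_aux.
    apply (continuous_ext (fun u => opp (RInt (fun v => f u v) d c))).
    intro u. rewrite opp_RInt_swap. reflexivity.
    apply exR. intros z. now apply cont2_snd.
    apply (continuous_opp (fun u => RInt (fun v => f u v) d c)). apply param_cont_aux; auto. lra.
Qed.


Lemma deriv_RInt_upper (h : R -> R) a z : (forall w, continuous h w) ->
  is_derive (fun z => RInt h a z) z (h z).
Proof.
  intro Hc. apply (is_derive_RInt (V:=R_NormedModule) h (fun z => RInt h a z) a z).
  apply filter_forall. intro w. apply (RInt_correct (V:=R_CompleteNormedModule)). apply exR; auto.
  apply Hc.
Qed.

Lemma fubini f a b c d : cont2 f ->
  RInt (fun x => RInt (fun y => f x y) c d) a b =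
  RInt (fun y => RInt (fun x => f x y) a b) c d.
Proof.
  intro Hf.
  set (g := fun z y => RInt (fun x => f x y) a z).
  set (H := fun z => RInt (fun y => g z y) c d).
  set (F := fun z => RInt (fun x => RInt (fun y => f x y) c d) a z).
  assert (Hs : cont2 (fun y x => f x y)) by (apply cont2_swap; auto).
  assert (gc : forall z y, continuous (fun y => g z y) y).
  { intros z y. unfold g. apply (param_cont (fun y x => f x y)). auto. }
  assert (dH : forall z, is_derive H z (RInt (fun y => f z y) c d)).
  { intro z. unfold H.
    assert (E : RInt (fun y => f z y) c d = RInt (fun y => Derive (fun u => g u y) z) c d).
    { apply RInt_ext. intros y _. symmetry. apply is_derive_unique. unfold g.
      apply (deriv_RInt_upper (fun x => f x y)). intro w. apply cont2_fst; auto. }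
    rewrite E.
    apply (is_derive_RInt_param (fun z y => g z y) c d z).
    - apply filter_forall. intros w t _. eexists. unfold g.
      apply (deriv_RInt_upper (fun x => f x t)). intro w'. apply cont2_fst; auto.
    - intros t _. apply (continuity_2d_pt_ext f).
      intros u v. symmetry. apply is_derive_unique. unfold g.
      apply (deriv_RInt_upper (fun x => f x v)). intro w'. apply cont2_fst; auto.
      apply Hf.
    - apply filter_forall. intro w. apply exR. intro y. apply gc. }
  assert (dF : forall z, is_derive F z (RInt (fun y => f z y) c d)).
  { intro z. unfold F. apply (deriv_RInt_upper (fun x => RInt (fun y => f x y) c d)).
    intro w. apply param_cont; auto. }
  pose (D := fun z => F z - H z).
  assert (K : is_RInt (fun _ => 0) a b (minus (D b) (D a))).
  { apply (is_RInt_derive (V:=R_CompleteNormedModule) D). unfold D.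
    intros x _. replace 0 with (RInt (fun y => f x y) c d - RInt (fun y => f x y) c d) by ring.
    apply (is_derive_minus F H); auto.
    intros; apply continuous_const. }
  apply (is_RInt_unique (V:=R_CompleteNormedModule)) in K. rewrite RInt_const in K.
  unfold minus, plus, opp, scal in K; simpl in K. unfold mult in K; simpl in K.
  assert (Fa : F a = 0). { unfold F. rewrite RInt_point. reflexivity. }
  assert (Ha : H a = 0). { unfold H, g. rewrite (RInt_ext _ (fun _ => 0)).
    rewrite RInt_const. unfold scal; simpl; unfold mult; simpl; ring.
    intros; rewrite RInt_point; reflexivity. }
  unfold D in K. unfold F, H, g in *. lra.
Qed.
Definition DI (f : R -> R -> R) := RInt (fun p => RInt (fun t => f t p) 0 PI) 0 (2 * PI).

Lemma inner_cont f : cont2 f -> forall p, continuous (fun p => RInt (fun t => f t p) 0 PI) p.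
Proof. intros H p. apply (param_cont (fun p t => f t p)). now apply cont2_swap. Qed.
Lemma inner_ex f : cont2 f -> forall p a b, ex_RInt (fun t => f t p) a b.
Proof. intros H p a b. apply exR. intro z. now apply cont2_fst. Qed.
Lemma outer_ex f : cont2 f -> forall a b, ex_RInt (fun p => RInt (fun t => f t p) 0 PI) a b.
Proof. intros H a b. apply exR. now apply inner_cont. Qed.

Lemma DI_ext f g : (forall t p, 0 <= t <= PI -> f t p = g t p) -> DI f = DI g.
Proof.
  intro H. unfold DI. apply RInt_ext. intros p _. apply RInt_ext. intros t Ht.
  rewrite Rmin_left in Ht by (pose proof PI_RGT_0; lra).
  rewrite Rmax_right in Ht by (pose proof PI_RGT_0; lra). apply H; lra.
Qed.

Lemma DI_plus f g : cont2 f -> cont2 g -> DI (fun t p => f t p + g t p) = DI f + DI g.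
Proof.
  intros Hf Hg. unfold DI.
  rewrite (RInt_ext _ (fun p => RInt (fun t => f t p) 0 PI + RInt (fun t => g t p) 0 PI)).
  apply (RInt_plus (V:=R_CompleteNormedModule)); apply outer_ex; auto.
  intros p _. apply (RInt_plus (V:=R_CompleteNormedModule) (fun t => f t p) (fun t => g t p)); apply inner_ex; auto.
Qed.

Lemma DI_scal k f : cont2 f -> DI (fun t p => k * f t p) = k * DI f.
Proof.
  intros Hf. unfold DI.
  rewrite (RInt_ext _ (fun p => k * RInt (fun t => f t p) 0 PI)).
  apply (RInt_scal (V:=R_CompleteNormedModule)); apply outer_ex; auto.
  intros p _. apply (RInt_scal (V:=R_CompleteNormedModule) (fun t => f t p)); apply inner_ex; auto.
Qed.

Lemma DI_le f g : cont2 f -> cont2 g -> (forall t p, 0 <= t <= PI -> f t p <= g t p) -> DI f <= DI g.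
Proof.
  intros Hf Hg H. pose proof PI_RGT_0. unfold DI. apply RInt_le. lra.
  apply outer_ex; auto. apply outer_ex; auto.
  intros p _. apply RInt_le. lra. apply inner_ex; auto. apply inner_ex; auto.
  intros t Ht. apply H. lra.
Qed.

Lemma DI_zero f : (forall p, RInt (fun t => f t p) 0 PI = 0) -> DI f = 0.
Proof.
  intro H. unfold DI. rewrite (RInt_ext _ (fun _ => 0)). rewrite RInt_const.
  unfold scal; simpl; unfold mult; simpl; ring. intros; apply H.
Qed.

Lemma DI_swap_zero f : cont2 f -> (forall t, RInt (fun p => f t p) 0 (2*PI) = 0) -> DI f = 0.
Proof.
  intros Hf H. unfold DI. rewrite <- fubini by auto.
  rewrite (RInt_ext _ (fun _ => 0)). rewrite RInt_const.
  unfold scal; simpl; unfold mult; simpl; ring. intros; apply H.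
Qed.

Lemma sphere_DI h : cont2 (fun t p => h (sin t * cos p) (sin t * sin p) (cos t) * sin t) ->
  sphere_int h = DI (fun t p => h (sin t * cos p) (sin t * sin p) (cos t) * sin t).
Proof. intro H. unfold sphere_int, DI. apply fubini. exact H. Qed.

Lemma RInt_le_deriv (f g G : R -> R) a b : a <= b ->
  (forall z, continuous f z) -> (forall z, continuous g z) ->
  (forall x, is_derive G x (g x)) ->
  (forall x, a <= x <= b -> f x <= g x) -> RInt f a b <= G b - G a.
Proof.
  intros Hab Hf Hg HG H.
  assert (E : RInt g a b = G b - G a).
  { apply (is_RInt_unique (V:=R_CompleteNormedModule)).
    apply (is_RInt_derive (V:=R_CompleteNormedModule) G g). intros; apply HG. intros; apply Hg. }
  rewrite <- E. apply RInt_le; auto. apply exR; auto. apply exR; auto.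
  intros; apply H; lra.
Qed.
Lemma RInt_ge_deriv (f g G : R -> R) a b : a <= b ->
  (forall z, continuous f z) -> (forall z, continuous g z) ->
  (forall x, is_derive G x (g x)) ->
  (forall x, a <= x <= b -> g x <= f x) -> G b - G a <= RInt f a b.
Proof.
  intros Hab Hf Hg HG H.
  assert (E : RInt g a b = G b - G a).
  { apply (is_RInt_unique (V:=R_CompleteNormedModule)).
    apply (is_RInt_derive (V:=R_CompleteNormedModule) G g). intros; apply HG. intros; apply Hg. }
  rewrite <- E. apply RInt_le; auto. apply exR; auto. apply exR; auto.
  intros; apply H; lra.
Qed.

Lemma c1 (g : R -> R) z : cont2 (fun u _ => g u) -> continuous g z.
Proof. intro H. apply (cont2_fst (fun u _ => g u) H 0 z). Qed.

Ltac cc := apply c1; intros ? ?; c2.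

Lemma d_test a x : a <> 0 -> is_derive (fun t => - / a * exp (- a * (1 - cos t))) x (sin x * exp (- a * (1 - cos x))).
Proof. intro. auto_derive. auto. unfold Rminus. field. auto. Qed.
Lemma cont_test a z : continuous (fun t => sin t * exp (- a * (1 - cos t))) z.
Proof. cc. Qed.
Search (exp _ <= exp _).

Lemma exp_mono x y : x <= y -> exp x <= exp y.
Proof. intros [h|h]. left; now apply exp_increasing. subst; lra. Qed.
Lemma sc2 t : sin t ^ 2 + cos t ^ 2 = 1.
Proof. pose proof (sin2_cos2 t). unfold Rsqr in H. simpl. lra. Qed.
Lemma PI_gt3 : 3 < PI.
Proof. pose proof PI2_3_2. lra. Qed.

Definition K0 a := RInt (fun t => sin t * exp (- a * sin t ^ 2)) 0 PI.
Definition K2 a := RInt (fun t => sin t ^ 3 * exp (- a * sin t ^ 2)) 0 PI.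

Lemma trig_h1 t : 0 <= t <= PI/2 -> 0 <= sin t /\ 0 <= cos t /\ sin t ^ 2 + cos t ^ 2 = 1 /\ cos t <= 1.
Proof. intros. pose proof PI_RGT_0. pose proof (COS_bound t). split. apply sin_ge_0; lra. split. apply cos_ge_0; lra. split. apply sc2. lra. Qed.
Lemma trig_h2 t : PI/2 <= t <= PI -> 0 <= sin t /\ cos t <= 0 /\ sin t ^ 2 + cos t ^ 2 = 1 /\ -1 <= cos t.
Proof. intros. pose proof PI_RGT_0. pose proof (COS_bound t). split. apply sin_ge_0; lra. split. apply cos_le_0; lra. split. apply sc2. lra. Qed.

Lemma K0_h1_up a : 0 < a -> RInt (fun t => sin t * exp (- a * sin t ^ 2)) 0 (PI/2) <= / a.
Proof.
  intro Ha. pose proof PI_RGT_0.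
  eapply Rle_trans.
  apply (RInt_le_deriv _ (fun t => sin t * exp (- a * (1 - cos t))) (fun t => - / a * exp (- a * (1 - cos t)))).
  lra. intro; cc. intro; cc.
  intro x. auto_derive. auto. unfold Rminus. field. lra.
  intros x Hx. destruct (trig_h1 x Hx) as (h1 & h2 & h3 & h4).
  try assert (0 <= a * (cos x * (1 - cos x))) by (apply Rmult_le_pos; nra).
  try assert (0 <= a * (- cos x * (1 + cos x))) by (apply Rmult_le_pos; nra).
  apply Rmult_le_compat_l. auto. apply exp_mono. nra.
  rewrite cos_PI2, cos_0. replace (- a * (1 - 1)) with 0 by ring. rewrite exp_0.
  pose proof (exp_pos (- a * (1 - 0))). assert (0 < / a) by (apply Rinv_0_lt_compat; auto). nra.
Qed.

Lemma K0_h2_up a : 0 < a -> RInt (fun t => sin t * exp (- a * sin t ^ 2)) (PI/2) PI <= / a.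
Proof.
  intro Ha. pose proof PI_RGT_0.
  eapply Rle_trans.
  apply (RInt_le_deriv _ (fun t => sin t * exp (- a * (1 + cos t))) (fun t => / a * exp (- a * (1 + cos t)))).
  lra. intro; cc. intro; cc.
  intro x. auto_derive. auto. field. lra.
  intros x Hx. destruct (trig_h2 x Hx) as (h1 & h2 & h3 & h4).
  try assert (0 <= a * (cos x * (1 - cos x))) by (apply Rmult_le_pos; nra).
  try assert (0 <= a * (- cos x * (1 + cos x))) by (apply Rmult_le_pos; nra).
  apply Rmult_le_compat_l. auto. apply exp_mono. nra.
  rewrite cos_PI2, cos_PI. replace (- a * (1 + -1)) with 0 by ring. rewrite exp_0.
  pose proof (exp_pos (- a * (1 + 0))). assert (0 < / a) by (apply Rinv_0_lt_compat; auto). nra.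
Qed.

Lemma K2_h1_up a : 0 < a -> RInt (fun t => sin t ^ 3 * exp (- a * sin t ^ 2)) 0 (PI/2) <= 2 / a ^ 2.
Proof.
  intro Ha. pose proof PI_RGT_0.
  eapply Rle_trans.
  apply (RInt_le_deriv _ (fun t => 2 * sin t * (1 - cos t) * exp (- a * (1 - cos t)))
     (fun t => - 2 * ((1 - cos t) / a + / a ^ 2) * exp (- a * (1 - cos t)))).
  lra. intro; cc. intro; cc.
  intro x. auto_derive. auto. unfold Rminus. field. lra.
  intros x Hx. destruct (trig_h1 x Hx) as (h1 & h2 & h3 & h4).
  try assert (0 <= a * (cos x * (1 - cos x))) by (apply Rmult_le_pos; nra).
  try assert (0 <= a * (- cos x * (1 + cos x))) by (apply Rmult_le_pos; nra).
  assert (E1 : exp (- a * sin x ^ 2) <= exp (- a * (1 - cos x))) by (apply exp_mono; nra).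
  pose proof (exp_pos (- a * sin x ^ 2)).
  assert (S1 : sin x ^ 2 <= 2 * (1 - cos x)) by nra.
  replace (sin x ^ 3 * exp (- a * sin x ^ 2)) with (sin x * (sin x ^ 2 * exp (- a * sin x ^ 2))) by ring.
  replace (2 * sin x * (1 - cos x) * exp (- a * (1 - cos x))) with (sin x * ((2 * (1 - cos x)) * exp (- a * (1 - cos x)))) by ring.
  apply Rmult_le_compat_l. auto. apply Rmult_le_compat; nra.
  rewrite cos_PI2, cos_0. replace (- a * (1 - 1)) with 0 by ring. rewrite exp_0.
  pose proof (exp_pos (- a * (1 - 0))). assert (0 < / a) by (apply Rinv_0_lt_compat; auto).
  assert (0 < / a ^ 2) by (apply Rinv_0_lt_compat; nra).
  replace (2 / a ^ 2) with (2 * / a ^ 2) by (unfold Rdiv; ring).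
  replace ((1 - 0) / a) with (/ a) by (field; lra). replace ((1 - 1) / a) with 0 by (field; lra).
  nra.
Qed.

Lemma K2_h2_up a : 0 < a -> RInt (fun t => sin t ^ 3 * exp (- a * sin t ^ 2)) (PI/2) PI <= 2 / a ^ 2.
Proof.
  intro Ha. pose proof PI_RGT_0.
  eapply Rle_trans.
  apply (RInt_le_deriv _ (fun t => 2 * sin t * (1 + cos t) * exp (- a * (1 + cos t)))
     (fun t => 2 * ((1 + cos t) / a + / a ^ 2) * exp (- a * (1 + cos t)))).
  lra. intro; cc. intro; cc.
  intro x. auto_derive. auto. field. lra.
  intros x Hx. destruct (trig_h2 x Hx) as (h1 & h2 & h3 & h4).
  try assert (0 <= a * (cos x * (1 - cos x))) by (apply Rmult_le_pos; nra).
  try assert (0 <= a * (- cos x * (1 + cos x))) by (apply Rmult_le_pos; nra).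
  assert (E1 : exp (- a * sin x ^ 2) <= exp (- a * (1 + cos x))) by (apply exp_mono; nra).
  pose proof (exp_pos (- a * sin x ^ 2)).
  assert (S1 : sin x ^ 2 <= 2 * (1 + cos x)) by nra.
  replace (sin x ^ 3 * exp (- a * sin x ^ 2)) with (sin x * (sin x ^ 2 * exp (- a * sin x ^ 2))) by ring.
  replace (2 * sin x * (1 + cos x) * exp (- a * (1 + cos x))) with (sin x * ((2 * (1 + cos x)) * exp (- a * (1 + cos x)))) by ring.
  apply Rmult_le_compat_l. auto. apply Rmult_le_compat; nra.
  rewrite cos_PI2, cos_PI. replace (- a * (1 + -1)) with 0 by ring. rewrite exp_0.
  pose proof (exp_pos (- a * (1 + 0))). assert (0 < / a) by (apply Rinv_0_lt_compat; auto).
  assert (0 < / a ^ 2) by (apply Rinv_0_lt_compat; nra).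
  replace (2 / a ^ 2) with (2 * / a ^ 2) by (unfold Rdiv; ring).
  replace ((1 + 0) / a) with (/ a) by (field; lra). replace ((1 + -1) / a) with 0 by (field; lra).
  nra.
Qed.

Lemma K0_h1_lo a : 0 < a -> (1 - exp (- (2 * a))) / (2 * a) <= RInt (fun t => sin t * exp (- a * sin t ^ 2)) 0 (PI/2).
Proof.
  intro Ha. pose proof PI_RGT_0.
  eapply Rle_trans. 2:
  apply (RInt_ge_deriv _ (fun t => sin t * exp (- (2 * a) * (1 - cos t))) (fun t => - / (2 * a) * exp (- (2 * a) * (1 - cos t)))).
  2: lra. 2: intro; cc. 2: intro; cc.
  2:{ intro x. auto_derive. auto. unfold Rminus. field. lra. }
  2:{ intros x Hx. destruct (trig_h1 x Hx) as (h1 & h2 & h3 & h4).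
  assert (0 <= a * (1 - cos x) ^ 2) by (apply Rmult_le_pos; nra).
  apply Rmult_le_compat_l. auto. apply exp_mono. nra. }
  rewrite cos_PI2, cos_0. replace (- (2 * a) * (1 - 1)) with 0 by ring. rewrite exp_0.
  replace (- (2 * a) * (1 - 0)) with (- (2 * a)) by ring. right. field. lra.
Qed.

Lemma K2_h1_lo a : 0 < a -> / (4 * a ^ 2) - (/ (2 * a) + / (4 * a ^ 2)) * exp (- (2 * a))
   <= RInt (fun t => sin t ^ 3 * exp (- a * sin t ^ 2)) 0 (PI/2).
Proof.
  intro Ha. pose proof PI_RGT_0.
  eapply Rle_trans. 2:
  apply (RInt_ge_deriv _ (fun t => sin t * (1 - cos t) * exp (- (2 * a) * (1 - cos t)))
     (fun t => - ((1 - cos t) / (2 * a) + / (4 * a ^ 2)) * exp (- (2 * a) * (1 - cos t)))).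
  2: lra. 2: intro; cc. 2: intro; cc.
  2:{ intro x. auto_derive. auto. unfold Rminus. field. lra. }
  2:{ intros x Hx. destruct (trig_h1 x Hx) as (h1 & h2 & h3 & h4).
  assert (0 <= a * (cos x * (1 - cos x))) by (apply Rmult_le_pos; nra).
  assert (0 <= a * (1 - cos x) ^ 2) by (apply Rmult_le_pos; nra).
  assert (E1 : exp (- (2 * a) * (1 - cos x)) <= exp (- a * sin x ^ 2)) by (apply exp_mono; nra).
  pose proof (exp_pos (- (2 * a) * (1 - cos x))).
  assert (S1 : 1 - cos x <= sin x ^ 2) by nra.
  replace (sin x ^ 3 * exp (- a * sin x ^ 2)) with (sin x * (sin x ^ 2 * exp (- a * sin x ^ 2))) by ring.
  replace (sin x * (1 - cos x) * exp (- (2 * a) * (1 - cos x))) with (sin x * ((1 - cos x) * exp (- (2 * a) * (1 - cos x)))) by ring.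
  apply Rmult_le_compat_l. auto. apply Rmult_le_compat; nra. }
  rewrite cos_PI2, cos_0. replace (- (2 * a) * (1 - 1)) with 0 by ring. rewrite exp_0.
  replace (- (2 * a) * (1 - 0)) with (- (2 * a)) by ring. right. field. lra.
Qed.

Lemma half_ge0 (f : R -> R) : (forall z, continuous f z) -> (forall t, PI/2 <= t <= PI -> 0 <= f t) ->
  0 <= RInt f (PI/2) PI.
Proof. intros Hc H. pose proof PI_RGT_0. apply RInt_ge_0. lra. apply exR; auto. intros; apply H; lra. Qed.

Lemma split_half (f : R -> R) : (forall z, continuous f z) ->
  RInt f 0 PI = RInt f 0 (PI/2) + RInt f (PI/2) PI.
Proof. intros Hc. symmetry. apply (RInt_Chasles (V:=R_CompleteNormedModule)); apply exR; auto. Qed.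

Lemma exp_bounds a : 4 <= a -> exp (- (2 * a)) * (1 + 2 * a) <= 1 /\ exp (- (2 * a)) * (1 + a) ^ 2 <= 1
  /\ 0 < exp (- (2 * a)).
Proof.
  intro Ha. pose proof (exp_pos (- (2 * a))) as P.
  assert (M : exp (- (2 * a)) * exp (2 * a) = 1).
  { rewrite <- exp_plus. replace (- (2 * a) + 2 * a) with 0 by ring. apply exp_0. }
  pose proof (exp_ineq1_le (2 * a)). pose proof (exp_ineq1_le a).
  assert (exp (2 * a) = exp a * exp a) by (rewrite <- exp_plus; f_equal; ring).
  split; [|split]; auto; nra.
Qed.

Lemma K0_bounds a : 4 <= a -> 1 / PI * / a <= K0 a <= PI ^ 2 / 4 * / a.
Proof.
  intro Ha. pose proof PI_gt3. unfold K0.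
  rewrite split_half by (intro; cc).
  pose proof (K0_h1_up a ltac:(lra)). pose proof (K0_h2_up a ltac:(lra)).
  pose proof (K0_h1_lo a ltac:(lra)).
  assert (0 <= RInt (fun t => sin t * exp (- a * sin t ^ 2)) (PI / 2) PI).
  { apply half_ge0. intro; cc. intros t Ht. destruct (trig_h2 t Ht) as (h1 & _).
    pose proof (exp_pos (- a * sin t ^ 2)). nra. }
  destruct (exp_bounds a Ha) as (B1 & B2 & B3).
  assert (0 < / a) by (apply Rinv_0_lt_compat; lra).
  set (ia := / a) in *. set (y := exp (- (2 * a))) in *.
  assert (aia : a * ia = 1) by (unfold ia; field; lra).
  assert (ipi : PI * (1 / PI) = 1) by (field; lra).
  assert (0 < 1 / PI) by (apply Rdiv_lt_0_compat; lra).
  replace ((1 - y) / (2 * a)) with ((1 - y) / 2 * ia) in * by (unfold ia; field; lra).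
  split.
  - assert (1 / PI <= (1 - y) / 2) by nra.
    assert (1 / PI * ia <= (1 - y) / 2 * ia) by (apply Rmult_le_compat_r; lra). lra.
  - assert (0 <= (PI ^ 2 / 4 - 2) * ia) by (apply Rmult_le_pos; nra). nra.
Qed.

Lemma K2_bounds a : 4 <= a -> 4 / PI ^ 3 * (1 / a ^ 2) <= K2 a <= PI ^ 4 / 16 * (1 / a ^ 2).
Proof.
  intro Ha. pose proof PI_gt3. unfold K2.
  rewrite split_half by (intro; cc).
  pose proof (K2_h1_up a ltac:(lra)). pose proof (K2_h2_up a ltac:(lra)).
  pose proof (K2_h1_lo a ltac:(lra)).
  assert (0 <= RInt (fun t => sin t ^ 3 * exp (- a * sin t ^ 2)) (PI / 2) PI).
  { apply half_ge0. intro; cc. intros t Ht. destruct (trig_h2 t Ht) as (h1 & _).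
    pose proof (exp_pos (- a * sin t ^ 2)). apply Rmult_le_pos; auto. apply pow_le; auto. lra. }
  destruct (exp_bounds a Ha) as (B1 & B2 & B3).
  set (ib := 1 / a ^ 2) in *. set (y := exp (- (2 * a))) in *.
  assert (0 < ib) by (unfold ib; apply Rdiv_lt_0_compat; nra).
  replace (2 / a ^ 2) with (2 * ib) in * by (unfold ib; field; lra).
  replace (/ (4 * a ^ 2) - (/ (2 * a) + / (4 * a ^ 2)) * y) with ((1 - (2 * a + 1) * y) / 4 * ib) in *
    by (unfold ib; field; lra).
  split.
  - assert (Y : (2 * a + 1) * y <= 9 / 25).
    { assert (9 * (1 + a) ^ 2 - 25 * (2 * a + 1) >= 0) by nra. nra. }
    assert (P3 : PI ^ 3 >= 27) by (simpl; nra).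
    assert (4 / PI ^ 3 <= (1 - (2 * a + 1) * y) / 4).
    { assert (PI ^ 3 * (1 - (2 * a + 1) * y) >= 16).
      { assert (0 <= (PI ^ 3 - 27) * (1 - (2 * a + 1) * y)) by (apply Rmult_le_pos; lra). lra. }
      set (z := (2 * a + 1) * y) in *.
      assert (E : 4 / PI ^ 3 = (1 - z) / 4 - (PI ^ 3 * (1 - z) - 16) / (4 * PI ^ 3)) by (field; lra).
      assert (0 <= (PI ^ 3 * (1 - z) - 16) / (4 * PI ^ 3)) by (apply Rdiv_le_0_compat; lra).
      lra. }
    assert (4 / PI ^ 3 * ib <= (1 - (2 * a + 1) * y) / 4 * ib) by (apply Rmult_le_compat_r; lra). lra.
  - assert (P2 : PI ^ 2 >= 9) by nra.
    assert (P4 : PI ^ 4 >= 81) by (replace (PI ^ 4) with (PI ^ 2 * PI ^ 2) by ring; nra).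
    assert (0 <= (PI ^ 4 / 16 - 4) * ib) by (apply Rmult_le_pos; lra). nra.
Qed.

Lemma RInt_deriv_eq (g G : R -> R) a b : (forall z, continuous g z) ->
  (forall x, is_derive G x (g x)) -> RInt g a b = G b - G a.
Proof.
  intros Hg HG. apply (is_RInt_unique (V:=R_CompleteNormedModule)).
  apply (is_RInt_derive (V:=R_CompleteNormedModule) G g). intros; apply HG. intros; apply Hg.
Qed.

Lemma T_id k a : RInt (fun t => k * (sin t * exp (- a * sin t ^ 2) * (2 - 3 * sin t ^ 2 - 2 * a * sin t ^ 2 * cos t ^ 2))) 0 PI = 0.
Proof.
  rewrite (RInt_deriv_eq _ (fun t => k * (sin t ^ 2 * cos t * exp (- a * sin t ^ 2)))).
  rewrite sin_0, sin_PI. match goal with |- ?x = ?y => change (@eq R x y) end. ring.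
  intro; cc.
  intro x. auto_derive. auto. pose proof (sc2 x). 
  replace (sin x * (sin x * 1)) with (sin x ^ 2) by ring.
  match goal with |- ?L = ?R => replace L with (R + 2 * k * sin x * exp (- a * sin x ^ 2) * (sin x ^ 2 + cos x ^ 2 - 1)) end.
  rewrite H. ring. ring.
Qed.

Lemma P_id nu1 nu2 t : RInt (fun p => sin t * exp (- (nu1 * cos p ^ 2 + nu2 * sin p ^ 2) * sin t ^ 2) * (cos p ^ 2 - sin p ^ 2)
   - 2 * (nu2 - nu1) * sin t ^ 3 * sin p ^ 2 * cos p ^ 2 * exp (- (nu1 * cos p ^ 2 + nu2 * sin p ^ 2) * sin t ^ 2)) 0 (2 * PI) = 0.
Proof.
  rewrite (RInt_deriv_eq _ (fun p => sin p * cos p * sin t * exp (- (nu1 * cos p ^ 2 + nu2 * sin p ^ 2) * sin t ^ 2))).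
  rewrite sin_0, sin_2PI. match goal with |- ?x = ?y => change (@eq R x y) end. ring.
  intro; cc.
  intro x. auto_derive. auto.
  repeat match goal with |- context [?u * (?u * 1)] => replace (u * (u * 1)) with (u ^ 2) by ring end.
  ring.
Qed.

Definition Ex nu1 nu2 t p := exp (- (nu1 * cos p ^ 2 + nu2 * sin p ^ 2) * sin t ^ 2).
Definition f0 nu1 nu2 t p := sin t * Ex nu1 nu2 t p.
Definition fx nu1 nu2 t p := cos p ^ 2 * (sin t ^ 3 * Ex nu1 nu2 t p).
Definition fy nu1 nu2 t p := sin p ^ 2 * (sin t ^ 3 * Ex nu1 nu2 t p).
Definition Tf nu1 nu2 k t p := k * (sin t * Ex nu1 nu2 t p * (2 - 3 * sin t ^ 2 - 2 * (nu1 * cos p ^ 2 + nu2 * sin p ^ 2) * sin t ^ 2 * cos t ^ 2)).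
Definition Pf nu1 nu2 t p := sin t * Ex nu1 nu2 t p * (cos p ^ 2 - sin p ^ 2)
   - 2 * (nu2 - nu1) * sin t ^ 3 * sin p ^ 2 * cos p ^ 2 * Ex nu1 nu2 t p.

Ltac uc := intros ? ?; unfold f0, fx, fy, Tf, Pf, Ex; c2.

Lemma DI_T nu1 nu2 (k : R -> R) : DI (fun t p => Tf nu1 nu2 (k p) t p) = 0.
Proof. apply DI_zero. intro p. unfold Tf, Ex. apply T_id. Qed.
Lemma DI_P nu1 nu2 : DI (Pf nu1 nu2) = 0.
Proof. apply DI_swap_zero. uc. intro t. unfold Pf, Ex. apply P_id. Qed.

Lemma ineq_y nu1 nu2 : nu2 <= nu1 -> DI (f0 nu1 nu2) <= (3 + 2 * Rmax nu2 0) * DI (fy nu1 nu2).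
Proof.
  intro Hn. set (m := Rmax nu2 0).
  set (X := fun t p => f0 nu1 nu2 t p - Tf nu1 nu2 (sin p ^ 2) t p - Pf nu1 nu2 t p).
  assert (cX : cont2 X) by (unfold X; uc).
  rewrite (DI_ext (f0 nu1 nu2) (fun t p => (X t p + Tf nu1 nu2 (sin p ^ 2) t p) + Pf nu1 nu2 t p)).
  2:{ intros; unfold X; ring. }
  rewrite DI_plus, DI_plus, DI_P, (DI_T nu1 nu2 (fun p => sin p ^ 2)); try uc; auto.
  rewrite <- DI_scal by uc. rewrite Rplus_0_r, Rplus_0_r.
  apply DI_le; auto; [uc|].
  intros t p Ht.
  assert (hs : 0 <= sin t) by (apply sin_ge_0; lra).
  pose proof (sc2 t) as ht. pose proof (sc2 p) as hp.
  assert (EQ : X t p = sin p ^ 2 * sin t ^ 3 * Ex nu1 nu2 t p * (3 + 2 * nu2 * cos t ^ 2 - 2 * (nu1 - nu2) * cos p ^ 2 * sin t ^ 2)).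
  { unfold X, f0, Tf, Pf. unfold Ex.
    replace (cos p ^ 2) with (1 - sin p ^ 2) by lra. replace (cos t ^ 2) with (1 - sin t ^ 2) by lra. ring. }
  rewrite EQ. unfold fy.
  assert (0 <= sin p ^ 2 * sin t ^ 3 * Ex nu1 nu2 t p).
  { unfold Ex. pose proof (exp_pos (- (nu1 * cos p ^ 2 + nu2 * sin p ^ 2) * sin t ^ 2)).
    apply Rmult_le_pos; [apply Rmult_le_pos|]; try lra. apply pow2_ge_0. apply pow_le; auto. }
  assert (nu2 * cos t ^ 2 <= m).
  { unfold m. destruct (Rle_dec 0 nu2). rewrite Rmax_left by lra. nra.
    rewrite Rmax_right by lra. nra. }
  assert (0 <= (nu1 - nu2) * cos p ^ 2 * sin t ^ 2).
  { apply Rmult_le_pos; [apply Rmult_le_pos|]; try lra; apply pow2_ge_0. }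
  assert (3 + 2 * nu2 * cos t ^ 2 - 2 * (nu1 - nu2) * cos p ^ 2 * sin t ^ 2 <= 3 + 2 * m) by lra.
  replace ((3 + 2 * m) * (sin p ^ 2 * (sin t ^ 3 * Ex nu1 nu2 t p))) with
     (sin p ^ 2 * sin t ^ 3 * Ex nu1 nu2 t p * (3 + 2 * m)) by ring.
  apply Rmult_le_compat_l; auto.
Qed.

Lemma ineq_x nu1 nu2 : nu1 <= nu2 -> DI (f0 nu1 nu2) <= (3 + 2 * Rmax nu1 0) * DI (fx nu1 nu2).
Proof.
  intro Hn. set (m := Rmax nu1 0).
  set (X := fun t p => f0 nu1 nu2 t p - Tf nu1 nu2 (cos p ^ 2) t p + Pf nu1 nu2 t p).
  assert (cX : cont2 X) by (unfold X; uc).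
  rewrite (DI_ext (f0 nu1 nu2) (fun t p => (X t p + Tf nu1 nu2 (cos p ^ 2) t p) + (-1) * Pf nu1 nu2 t p)).
  2:{ intros; unfold X; ring. }
  rewrite DI_plus, DI_plus, DI_scal, DI_P, (DI_T nu1 nu2 (fun p => cos p ^ 2)); try uc; auto.
  rewrite <- DI_scal by uc. rewrite Rmult_0_r, Rplus_0_r, Rplus_0_r.
  apply DI_le; auto; [uc|].
  intros t p Ht.
  assert (hs : 0 <= sin t) by (apply sin_ge_0; lra).
  pose proof (sc2 t) as ht. pose proof (sc2 p) as hp.
  assert (EQ : X t p = cos p ^ 2 * sin t ^ 3 * Ex nu1 nu2 t p * (3 + 2 * nu1 * cos t ^ 2 - 2 * (nu2 - nu1) * sin p ^ 2 * sin t ^ 2)).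
  { unfold X, f0, Tf, Pf. unfold Ex.
    replace (cos p ^ 2) with (1 - sin p ^ 2) by lra. replace (cos t ^ 2) with (1 - sin t ^ 2) by lra. ring. }
  rewrite EQ. unfold fx.
  assert (0 <= cos p ^ 2 * sin t ^ 3 * Ex nu1 nu2 t p).
  { unfold Ex. pose proof (exp_pos (- (nu1 * cos p ^ 2 + nu2 * sin p ^ 2) * sin t ^ 2)).
    apply Rmult_le_pos; [apply Rmult_le_pos|]; try lra. apply pow2_ge_0. apply pow_le; auto. }
  assert (nu1 * cos t ^ 2 <= m).
  { unfold m. destruct (Rle_dec 0 nu1). rewrite Rmax_left by lra. nra.
    rewrite Rmax_right by lra. nra. }
  assert (0 <= (nu2 - nu1) * sin p ^ 2 * sin t ^ 2).
  { apply Rmult_le_pos; [apply Rmult_le_pos|]; try lra; apply pow2_ge_0. }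
  assert (3 + 2 * nu1 * cos t ^ 2 - 2 * (nu2 - nu1) * sin p ^ 2 * sin t ^ 2 <= 3 + 2 * m) by lra.
  replace ((3 + 2 * m) * (cos p ^ 2 * (sin t ^ 3 * Ex nu1 nu2 t p))) with
     (cos p ^ 2 * sin t ^ 3 * Ex nu1 nu2 t p * (3 + 2 * m)) by ring.
  apply Rmult_le_compat_l; auto.
Qed.

Lemma A_ge nu1 nu2 p : 4 <= nu1 -> 4 <= nu2 -> 4 <= nu1 * cos p ^ 2 + nu2 * sin p ^ 2.
Proof. intros. pose proof (sc2 p). pose proof (pow2_ge_0 (cos p)). pose proof (pow2_ge_0 (sin p)). nra. Qed.

Lemma inv_cont nu1 nu2 z : 4 <= nu1 -> 4 <= nu2 -> continuous (fun p => / (nu1 * cos p ^ 2 + nu2 * sin p ^ 2)) z.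
Proof. intros. apply continuous_Rinv_comp. cc. pose proof (A_ge nu1 nu2 z). lra. Qed.

Lemma RIscal (f : R -> R) k a b : ex_RInt f a b -> RInt (fun x => k * f x) a b = k * RInt f a b.
Proof. intro. apply (RInt_scal (V:=R_CompleteNormedModule)); auto. Qed.

Lemma exscal (f : R -> R) k a b : ex_RInt f a b -> ex_RInt (fun x => k * f x) a b.
Proof. intro H. apply (ex_RInt_scal (V:=R_CompleteNormedModule) f a b k H). Qed.

Lemma final_bounds nu1 nu2 : 4 <= nu1 -> 4 <= nu2 ->
  let A := fun phi => nu1 * (cos phi) ^ 2 + nu2 * (sin phi) ^ 2 in
  let J0 := RInt (fun phi => / A phi) 0 (2 * PI) in
  let Jc := RInt (fun phi => (cos phi) ^ 2 / (A phi) ^ 2) 0 (2 * PI) in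
  let Js := RInt (fun phi => (sin phi) ^ 2 / (A phi) ^ 2) 0 (2 * PI) in
  let I0 := DI (f0 nu1 nu2) in let Ix := DI (fx nu1 nu2) in let Iy := DI (fy nu1 nu2) in
    (1 / PI) * J0 <= I0 /\ I0 <= (PI ^ 2 / 4) * J0 /\
    (4 / PI ^ 3) * Jc <= Ix /\ Ix <= (PI ^ 4 / 16) * Jc /\
    (4 / PI ^ 3) * Js <= Iy /\ Iy <= (PI ^ 4 / 16) * Js.
Proof.
  intros H1 H2 A J0 Jc Js I0 Ix Iy.
  pose proof PI_RGT_0 as HP.
  assert (HA : forall p, 4 <= A p) by (intro; apply A_ge; auto).
  assert (exA : ex_RInt (fun phi => / A phi) 0 (2 * PI)) by (apply exR; intro; apply inv_cont; auto).
  assert (cA2 : forall z, continuous (fun phi => / (A phi) ^ 2) z).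
  { intro z. apply continuous_Rinv_comp. unfold A; cc. pose proof (HA z). nra. }
  assert (exC : ex_RInt (fun phi => (cos phi) ^ 2 / (A phi) ^ 2) 0 (2 * PI)).
  { apply exR; intro z. apply (continuous_mult (fun phi => cos phi ^ 2) (fun phi => / (A phi) ^ 2)).
    cc. apply cA2. }
  assert (exS : ex_RInt (fun phi => (sin phi) ^ 2 / (A phi) ^ 2) 0 (2 * PI)).
  { apply exR; intro z. apply (continuous_mult (fun phi => sin phi ^ 2) (fun phi => / (A phi) ^ 2)).
    cc. apply cA2. }
  assert (e0 : ex_RInt (fun p => RInt (fun t => f0 nu1 nu2 t p) 0 PI) 0 (2 * PI)) by (apply outer_ex; uc).
  assert (ex : ex_RInt (fun p => RInt (fun t => fx nu1 nu2 t p) 0 PI) 0 (2 * PI)) by (apply outer_ex; uc).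
  assert (ey : ex_RInt (fun p => RInt (fun t => fy nu1 nu2 t p) 0 PI) 0 (2 * PI)) by (apply outer_ex; uc).
  assert (K0e : forall p, RInt (fun t => f0 nu1 nu2 t p) 0 PI = K0 (A p)) by reflexivity.
  assert (K2x : forall p, RInt (fun t => fx nu1 nu2 t p) 0 PI = cos p ^ 2 * K2 (A p)).
  { intro p. unfold fx. rewrite RIscal. reflexivity. apply exR. intro; cc. }
  assert (K2y : forall p, RInt (fun t => fy nu1 nu2 t p) 0 PI = sin p ^ 2 * K2 (A p)).
  { intro p. unfold fy. rewrite RIscal. reflexivity. apply exR. intro; cc. }
  unfold J0, Jc, Js, I0, Ix, Iy, DI.
  rewrite <- !RIscal by auto.
  repeat split; apply RInt_le; try lra; auto; try (apply exscal; auto); intros p _.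
  - rewrite K0e. apply (K0_bounds (A p) (HA p)).
  - rewrite K0e. apply (K0_bounds (A p) (HA p)).
  - rewrite K2x. destruct (K2_bounds (A p) (HA p)) as [u _].
    pose proof (pow2_ge_0 (cos p)).
    replace (4 / PI ^ 3 * (cos p ^ 2 / A p ^ 2)) with (cos p ^ 2 * (4 / PI ^ 3 * (1 / A p ^ 2))) by (unfold Rdiv; ring).
    apply Rmult_le_compat_l; auto.
  - rewrite K2x. destruct (K2_bounds (A p) (HA p)) as [_ u].
    pose proof (pow2_ge_0 (cos p)).
    replace (PI ^ 4 / 16 * (cos p ^ 2 / A p ^ 2)) with (cos p ^ 2 * (PI ^ 4 / 16 * (1 / A p ^ 2))) by (unfold Rdiv; ring).
    apply Rmult_le_compat_l; auto.
  - rewrite K2y. destruct (K2_bounds (A p) (HA p)) as [u _].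
    pose proof (pow2_ge_0 (sin p)).
    replace (4 / PI ^ 3 * (sin p ^ 2 / A p ^ 2)) with (sin p ^ 2 * (4 / PI ^ 3 * (1 / A p ^ 2))) by (unfold Rdiv; ring).
    apply Rmult_le_compat_l; auto.
  - rewrite K2y. destruct (K2_bounds (A p) (HA p)) as [_ u].
    pose proof (pow2_ge_0 (sin p)).
    replace (PI ^ 4 / 16 * (sin p ^ 2 / A p ^ 2)) with (sin p ^ 2 * (PI ^ 4 / 16 * (1 / A p ^ 2))) by (unfold Rdiv; ring).
    apply Rmult_le_compat_l; auto.
Qed.

Lemma nu_large nu1 nu2 : 0 < DI (f0 nu1 nu2) ->
  DI (fx nu1 nu2) < 1 / 11 * DI (f0 nu1 nu2) -> DI (fy nu1 nu2) < 1 / 11 * DI (f0 nu1 nu2) ->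
  4 <= nu1 /\ 4 <= nu2.
Proof.
  intros H0 Hx Hy.
  destruct (Rle_dec nu2 nu1) as [h|h].
  - pose proof (ineq_y nu1 nu2 h).
    assert (0 <= DI (fy nu1 nu2)).
    { pose proof (Rmax_r nu2 0). nra. }
    assert (11 < 3 + 2 * Rmax nu2 0) by nra.
    destruct (Rle_dec 0 nu2). rewrite Rmax_left in * by lra. lra.
    rewrite Rmax_right in * by lra. lra.
  - pose proof (ineq_x nu1 nu2 ltac:(lra)).
    assert (0 <= DI (fx nu1 nu2)).
    { pose proof (Rmax_r nu1 0). nra. }
    assert (11 < 3 + 2 * Rmax nu1 0) by nra.
    destruct (Rle_dec 0 nu1). rewrite Rmax_left in * by lra. lra.
    rewrite Rmax_right in * by lra. lra.
Qed.

Lemma DI_nonneg f : cont2 f -> (forall t p, 0 <= t <= PI -> 0 <= f t p) -> 0 <= DI f.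
Proof.
  intros Hf H. replace 0 with (DI (fun _ _ => 0)). apply DI_le; auto. intros x y; c2.
  apply DI_zero. intro. rewrite RInt_const. unfold scal; simpl; unfold mult; simpl; ring.
Qed.

Lemma expo nu1 nu2 t p : - nu1 * (sin t * cos p) ^ 2 - nu2 * (sin t * sin p) ^ 2 = - (nu1 * cos p ^ 2 + nu2 * sin p ^ 2) * sin t ^ 2.
Proof. ring. Qed.

Lemma ratio_lem (e X I l : R) : 0 < e -> 0 < I -> (e * X) / (e * I) = l -> X = l * I.
Proof. intros He HI H. rewrite <- H. field. split; lra. Qed.

Theorem lemma2p4 :
  exists delta0 : R, 0 < delta0 /\
  forall l1 l2 l3 mu1 mu2 mu3 : R,
    -(1/3) < l1 -> l1 <= l2 -> l2 <= l3 -> l3 < 2/3 ->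
    l1 + l2 + l3 = 0 ->
    l2 + 1/3 < delta0 ->
    bm_multipliers l1 l2 l3 mu1 mu2 mu3 ->
    let nu1 := - (2 * mu1 + mu2) in
    let nu2 := - (mu1 + 2 * mu2) in
    let A := fun phi => nu1 * (cos phi) ^ 2 + nu2 * (sin phi) ^ 2 in
    let I0 := sphere_int (fun x y z => exp (- nu1 * x ^ 2 - nu2 * y ^ 2)) in
    let Ix := sphere_int (fun x y z => x ^ 2 * exp (- nu1 * x ^ 2 - nu2 * y ^ 2)) in
    let Iy := sphere_int (fun x y z => y ^ 2 * exp (- nu1 * x ^ 2 - nu2 * y ^ 2)) in
    let J0 := RInt (fun phi => / A phi) 0 (2 * PI) in
    let Jc := RInt (fun phi => (cos phi) ^ 2 / (A phi) ^ 2) 0 (2 * PI) in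
    let Js := RInt (fun phi => (sin phi) ^ 2 / (A phi) ^ 2) 0 (2 * PI) in
    (1 / PI) * J0 <= I0 /\ I0 <= (PI ^ 2 / 4) * J0 /\
    (4 / PI ^ 3) * Jc <= Ix /\ Ix <= (PI ^ 4 / 16) * Jc /\
    (4 / PI ^ 3) * Js <= Iy /\ Iy <= (PI ^ 4 / 16) * Js.
Proof.
  exists (1 / 11). split. lra.
  intros l1 l2 l3 mu1 mu2 mu3 h1 h2 h3 h4 hs hd [hm [hx [hy hz]]] nu1 nu2.
  assert (E0 : sphere_int (fun x y z => exp (- nu1 * x ^ 2 - nu2 * y ^ 2)) = DI (f0 nu1 nu2)).
  { rewrite sphere_DI by (intros ? ?; c2). apply DI_ext. intros t p _.
    unfold f0, Ex. rewrite expo. ring. }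
  assert (EX : sphere_int (fun x y z => x ^ 2 * exp (- nu1 * x ^ 2 - nu2 * y ^ 2)) = DI (fx nu1 nu2)).
  { rewrite sphere_DI by (intros ? ?; c2). apply DI_ext. intros t p _.
    unfold fx, Ex. rewrite expo. ring. }
  assert (EY : sphere_int (fun x y z => y ^ 2 * exp (- nu1 * x ^ 2 - nu2 * y ^ 2)) = DI (fy nu1 nu2)).
  { rewrite sphere_DI by (intros ? ?; c2). apply DI_ext. intros t p _.
    unfold fy, Ex. rewrite expo. ring. }
  assert (W : forall t p, bm_weight mu1 mu2 mu3 (sin t * cos p) (sin t * sin p) (cos t)
              = exp mu3 * Ex nu1 nu2 t p).
  { intros t p. unfold bm_weight, Ex. rewrite <- exp_plus. f_equal.
    pose proof (sc2 t). pose proof (sc2 p). unfold nu1, nu2.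
    replace mu3 with (- mu1 - mu2) by lra. rewrite !Rpow_mult_distr.
    replace (cos t ^ 2) with (1 - sin t ^ 2) by lra. replace (cos p ^ 2) with (1 - sin p ^ 2) by lra. ring. }
  assert (BZ : bm_Z mu1 mu2 mu3 = exp mu3 * DI (f0 nu1 nu2)).
  { unfold bm_Z. rewrite sphere_DI by (intros ? ?; unfold bm_weight; c2). rewrite <- DI_scal by uc.
    apply DI_ext. intros t p _. rewrite W. unfold f0. ring. }
  assert (BX : sphere_int (fun x y z => x ^ 2 * bm_weight mu1 mu2 mu3 x y z) = exp mu3 * DI (fx nu1 nu2)).
  { rewrite sphere_DI by (intros ? ?; unfold bm_weight; c2). rewrite <- DI_scal by uc.
    apply DI_ext. intros t p _. rewrite W. unfold fx. ring. }
  assert (BY : sphere_int (fun x y z => y ^ 2 * bm_weight mu1 mu2 mu3 x y z) = exp mu3 * DI (fy nu1 nu2)).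
  { rewrite sphere_DI by (intros ? ?; unfold bm_weight; c2). rewrite <- DI_scal by uc.
    apply DI_ext. intros t p _. rewrite W. unfold fy. ring. }
  rewrite BZ, BX in hx. rewrite BZ, BY in hy.
  pose proof (exp_pos mu3) as hp.
  assert (P0 : 0 <= DI (f0 nu1 nu2)).
  { apply DI_nonneg. uc. intros t p Ht. unfold f0, Ex.
    pose proof (sin_ge_0 t ltac:(lra) ltac:(lra)). pose proof (exp_pos (- (nu1 * cos p ^ 2 + nu2 * sin p ^ 2) * sin t ^ 2)). nra. }
  assert (P1 : 0 < DI (f0 nu1 nu2)).
  { destruct P0 as [P0|P0]; auto. rewrite <- P0 in hx. rewrite Rmult_0_r, Rdiv_0_r in hx. lra. }
  assert (Rx : DI (fx nu1 nu2) = (l1 + 1/3) * DI (f0 nu1 nu2)).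
  { apply (ratio_lem (exp mu3)); auto. }
  assert (Ry : DI (fy nu1 nu2) = (l2 + 1/3) * DI (f0 nu1 nu2)).
  { apply (ratio_lem (exp mu3)); auto. }
  destruct (nu_large nu1 nu2 P1) as [n1 n2].
  { rewrite Rx. apply Rmult_lt_compat_r; lra. }
  { rewrite Ry. apply Rmult_lt_compat_r; lra. }
  intros A I0 Ix Iy J0 Jc Js.
  unfold I0, Ix, Iy. rewrite E0, EX, EY.
  exact (final_bounds nu1 nu2 n1 n2).
Qed.
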